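(* Let $\mathcal M_1=(X_1,\mathcal N_1,V_1)$ and $\mathcal M_2=(X_2,\mathcal N_2,V_2)$ be quasi-discrete neighbourhood models. (1) If $(Z_{\mathcal N},Z_1,Z_2)$ is a path preserving bisimulation between $\mathcal M_1$ and $\mathcal M_2$, then $Z_{\mathcal N}$ is a modal bisimulation with converse. (2) If $\rho\subseteq X_1\times X_2$ is a non-empty modal bisimulation with converse, then there exist relations $Z_1,Z_2$ such that $(\rho,Z_1,Z_2)$ is a path preserving bisimulation between $\mathcal M_1$ and $\mathcal M_2$.
   Context: A neighbourhood space $(X,\mathcal N)$ assigns to each $x\in X$ a filter $\mathcal N(x)$ on $X$ (closed under finite intersections and supersets, not containing $\emptyset$) such that $x\in N$ for all $N\in\mathcal N(x)$. It is quasi-discrete if each $x$ has a minimal neighbourhood $N_{\min}(x)\in\mathcal N(x)$ contained in every element of $\mathcal N(x)$. A quasi-discrete neighbourhood model $(X,\mathcal N,V)$ has a quasi-discrete space, index space $\mathbb N$ with usual order, least element $0$ and $N_{\min}(n)=\{n,n+1\}$, and a valuation $V:X\to\mathcal P(\mathsf P)$ for a countable set $\mathsf P$ of atoms. A path is a continuous map $p:\mathbb N\to X$, equivalently $p(n+1)\in N_{\min}(p(n))$ for all $n$. Induced edge relation: $R=\{(x,y)\mid y\in N_{\min}(x)\}$. Modal bisimulation with converse: $\rho\subseteq X_1\times X_2$ such that for every pair $x_1\rho x_2$: $V_1(x_1)=V_2(x_2)$; if $(x_1,y_1)\in R_1$ then there is $y_2$ with $(x_2,y_2)\in R_2$ and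 $y_1\rho y_2$; if $(x_2,y_2)\in R_2$ then there is $y_1$ with $(x_1,y_1)\in R_1$ and $y_1\rho y_2$; if $(y_1,x_1)\in R_1$ then there is $y_2$ with $(y_2,x_2)\in R_2$ and $y_1\rho y_2$; if $(y_2,x_2)\in R_2$ then there is $y_1$ with $(y_1,x_1)\in R_1$ and $y_1\rho y_2$. Path preserving bisimulation: with path sets $\mathcal P_1,\mathcal P_2$ and index set $I=\mathbb N$, a triple $(Z_{\mathcal N},Z_1,Z_2)$, $\emptyset\ne Z_{\mathcal N}\subseteq X_1\times X_2$, $Z_1\subseteq(\mathcal P_1\times I)\times(\mathcal P_2\times I)$, $Z_2\subseteq(\mathcal P_2\times I)\times(\mathcal P_1\times I)$, such that: (1) at each pair $x_1Z_{\mathcal N}x_2$: $V_1(x_1)=V_2(x_2)$; for every $N_2\in\mathcal N_2(x_2)$ there is $N_1\in\mathcal N_1(x_1)$ with every $y_1\in N_1$ related to some $y_2\in N_2$; and for every $N_1\in\mathcal N_1(x_1)$ there is $N_2\in\mathcal N_2(x_2)$ with every $y_2\in N_2$ related to some $y_1\in N_1$; (2) if $x_1Z_{\mathcal N}x_2$, $p(0)=x_1$, $n\ne0$, there are $q$ with $q(0)=x_2$ and $m$ with $p(n)Z_{\mathcal N}q(m)$, $(p,n)Z_1(q,m)$; (3) if $x_1Z_{\mathcal N}x_2$, $p(n)=x_1$, $n\ne0$, there are $q,m$ with $q(m)=x_2$, $p(0)Z_{\mathcal N}q(0)$, $(p,n)Z_1(q,m)$; (4) if $(p,n)Z_1(q,m)$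 and $0<k_q<m$, there is $0<k_p<n$ with $p(k_p)Z_{\mathcal N}q(k_q)$; (5) if $x_1Z_{\mathcal N}x_2$, $q(0)=x_2$, $m\ne0$, there are $p$ with $p(0)=x_1$ and $n$ with $p(n)Z_{\mathcal N}q(m)$, $(q,m)Z_2(p,n)$; (6) if $x_1Z_{\mathcal N}x_2$, $q(m)=x_2$, $m\neq0$, there are $p,n$ with $p(n)=x_1$, $p(0)Z_{\mathcal N}q(0)$, $(q,m)Z_2(p,n)$; (7) if $(q,m)Z_2(p,n)$ and $0<k_p<n$, there is $0<k_q<m$ with $p(k_p)Z_{\mathcal N}q(k_q)$. *)

(* Defs.v *)
From mathcomp Require Import all_boot.
Set Implicit Arguments.
Unset Strict Implicit.
Unset Printing Implicit Defensive.

Record QDModel (P : countType) := {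
  carrier :> Type;
  nbh : carrier -> (carrier -> Prop) -> Prop;
  nbh_full : forall x, nbh x (fun _ => True);
  nbh_inter : forall x U W, nbh x U -> nbh x W -> nbh x (fun y => U y /\ W y);
  nbh_super : forall x U W, nbh x U -> (forall y, U y -> W y) -> nbh x W;
  nbh_nonempty : forall x U, nbh x U -> exists y, U y;
  nbh_point : forall x U, nbh x U -> U x;
  Nmin : carrier -> carrier -> Prop;
  Nmin_nbh : forall x, nbh x (Nmin x);
  Nmin_least : forall x U, nbh x U -> forall y, Nmin x y -> U y;
  val : carrier -> P -> Prop
}.

(* Index space N: neighbourhood filter of n generated by N_min(n) = {n, n+1}. *)
Definition idx_nbh (n : nat) (W : nat -> Prop) : Prop := W n /\ W n.+1.

Definition is_path (P : countType) (M : QDModel P) (p : nat -> M) : Prop :=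
  forall n U, nbh (p n) U -> exists W, idx_nbh n W /\ forall k, W k -> U (p k).

Definition edge (P : countType) (M : QDModel P) (x y : M) : Prop := Nmin x y.

Definition modal_bisim_conv (P : countType) (M1 M2 : QDModel P)
    (rho : M1 -> M2 -> Prop) : Prop :=
  forall x1 x2, rho x1 x2 ->
    (forall a, val x1 a <-> val x2 a) /\
    (forall y1, edge x1 y1 -> exists y2, edge x2 y2 /\ rho y1 y2) /\
    (forall y2, edge x2 y2 -> exists y1, edge x1 y1 /\ rho y1 y2) /\
    (forall y1, edge y1 x1 -> exists y2, edge y2 x2 /\ rho y1 y2) /\
    (forall y2, edge y2 x2 -> exists y1, edge y1 x1 /\ rho y1 y2).

(* Path preserving bisimulation (Z_N, Z1, Z2). Z1, Z2 relate (path, index) pairs;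
   they are required to relate paths only (Z1 ⊆ (P1 x I) x (P2 x I)). *)
Definition pp_bisim (P : countType) (M1 M2 : QDModel P)
    (Z : M1 -> M2 -> Prop)
    (Z1 : (nat -> M1) * nat -> (nat -> M2) * nat -> Prop)
    (Z2 : (nat -> M2) * nat -> (nat -> M1) * nat -> Prop) : Prop :=
  (exists x1 x2, Z x1 x2) /\
  (forall p n q m, Z1 (p, n) (q, m) -> is_path p /\ is_path q) /\
  (forall q m p n, Z2 (q, m) (p, n) -> is_path q /\ is_path p) /\
  (* (1) *)
  (forall x1 x2, Z x1 x2 ->
     (forall a, val x1 a <-> val x2 a) /\
     (forall N2, nbh x2 N2 -> exists N1, nbh x1 N1 /\
        forall y1, N1 y1 -> exists y2, N2 y2 /\ Z y1 y2) /\
     (forall N1, nbh x1 N1 -> exists N2, nbh x2 N2 /\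
        forall y2, N2 y2 -> exists y1, N1 y1 /\ Z y1 y2)) /\
  (* (2) *)
  (forall x1 x2 p n, Z x1 x2 -> is_path p -> p 0 = x1 -> n <> 0 ->
     exists q m, is_path q /\ q 0 = x2 /\ Z (p n) (q m) /\ Z1 (p, n) (q, m)) /\
  (* (3) *)
  (forall x1 x2 p n, Z x1 x2 -> is_path p -> p n = x1 -> n <> 0 ->
     exists q m, is_path q /\ q m = x2 /\ Z (p 0) (q 0) /\ Z1 (p, n) (q, m)) /\
  (* (4) *)
  (forall p n q m, Z1 (p, n) (q, m) -> forall kq, 0 < kq < m ->
     exists kp, 0 < kp < n /\ Z (p kp) (q kq)) /\
  (* (5) *)
  (forall x1 x2 q m, Z x1 x2 -> is_path q -> q 0 = x2 -> m <> 0 ->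
     exists p n, is_path p /\ p 0 = x1 /\ Z (p n) (q m) /\ Z2 (q, m) (p, n)) /\
  (* (6) *)
  (forall x1 x2 q m, Z x1 x2 -> is_path q -> q m = x2 -> m <> 0 ->
     exists p n, is_path p /\ p n = x1 /\ Z (p 0) (q 0) /\ Z2 (q, m) (p, n)) /\
  (* (7) *)
  (forall q m p n, Z2 (q, m) (p, n) -> forall kp, 0 < kp < n ->
     exists kq, 0 < kq < m /\ Z (p kp) (q kq)).

(* Main.v *)
From Stdlib Require Import Classical ClassicalEpsilon.
Require Import Defs.
From mathcomp Require Import all_boot zify.

Set Implicit Arguments.
Unset Strict Implicit.
Section Aux.
Variable P : countType.

Lemma Nmin_refl (M : QDModel P) (x : M) : Nmin x x.
Proof. exact: nbh_point (Nmin_nbh x). Qed.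

Lemma pathP (M : QDModel P) (p : nat -> M) :
  is_path p <-> forall n, Nmin (p n) (p n.+1).
Proof.
split.
- move=> H n. have [W [[_ W1] HW]] := H n _ (Nmin_nbh (p n)). exact: HW.
- move=> H n U HU. exists (fun k => k = n \/ k = n.+1); split.
  + by split; [left|right].
  + move=> k [->|->]; first exact: nbh_point HU.
    exact: Nmin_least HU _ (H n).
Qed.

Lemma choice_step (A B : Type) (Q : A -> B -> B -> Prop) :
  (forall a b, exists c, Q a b c) -> exists f : A -> B -> B, forall a b, Q a b (f a b).
Proof.
move=> H.
exists (fun a b => proj1_sig (constructive_indefinite_description _ (H a b))).
move=> a b; exact: proj2_sig (constructive_indefinite_description _ (H a b)).
Qed.

Lemma fwd (A B : QDModel P) (R : A -> B -> Prop)
  (zig : forall a b, R a b -> forall a', edge a a' -> exists b', edge b b' /\ R a' b')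
  (p : nat -> A) (b0 : B) :
  is_path p -> R (p 0) b0 ->
  exists q, is_path q /\ q 0 = b0 /\ forall k, R (p k) (q k).
Proof.
move=> /pathP Hp H0.
have [f Hf] : exists f : nat -> B -> B, forall k b,
    R (p k) b -> edge b (f k b) /\ R (p k.+1) (f k b).
  apply: (@choice_step nat B (fun k b c => R (p k) b -> edge b c /\ R (p k.+1) c)).
  move=> k b; case: (classic (R (p k) b)) => Hr.
  - have [c Hc] := zig _ _ Hr _ (Hp k); by exists c.
  - by exists b.
pose q := fix q k := if k is k'.+1 then f k' (q k') else b0.
have HR : forall k, R (p k) (q k).
  elim=> [|k IH] //=. exact: (Hf _ _ IH).2.
exists q; split; last split => //.
apply/pathP => n /=. exact: (Hf _ _ (HR n)).1.
Qed.

Lemma bwd (A B : QDModel P) (R : A -> B -> Prop)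
  (zag : forall a b, R a b -> forall a', edge a' a -> exists b', edge b' b /\ R a' b')
  (p : nat -> A) (n : nat) (b0 : B) :
  is_path p -> R (p n) b0 ->
  exists q, is_path q /\ q n = b0 /\ forall k, k <= n -> R (p k) (q k).
Proof.
move=> /pathP Hp H0.
have [g Hg] : exists g : nat -> B -> B, forall k b,
    R (p k.+1) b -> edge (g k b) b /\ R (p k) (g k b).
  apply: (@choice_step nat B (fun k b c => R (p k.+1) b -> edge c b /\ R (p k) c)).
  move=> k b; case: (classic (R (p k.+1) b)) => Hr.
  - have [c Hc] := zag _ _ Hr _ (Hp k); by exists c.
  - by exists b.
pose r := fix r j := if j is j'.+1 then g (n - j'.+1) (r j') else b0.
have HR : forall j, j <= n -> R (p (n - j)) (r j).
  elim=> [|j IH] Hj /=; first by rewrite subn0.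
  have Hj' : j <= n by apply: ltnW.
  have E : (n - j.+1).+1 = n - j by rewrite subnS prednK // subn_gt0.
  apply: (proj2 (Hg (n - j.+1) (r j) _)). rewrite E. exact: IH.
have HE : forall j, j < n -> edge (r j.+1) (r j).
  move=> j Hj /=.
  have E : (n - j.+1).+1 = n - j by rewrite subnS prednK // subn_gt0.
  apply: (proj1 (Hg (n - j.+1) (r j) _)). rewrite E. exact: HR (ltnW Hj).
exists (fun k => if k <= n then r (n - k) else b0); split; last split.
- apply/pathP => k /=.
  case: (ltngtP k n) => Hk.
  +
    have Ek : n - k = (n - k.+1).+1 by rewrite subnS prednK // subn_gt0.
    rewrite Ek; apply: HE.
    lia.
  + exact: Nmin_refl.
  + rewrite Hk subnn; exact: Nmin_refl.
- by rewrite leqnn subnn.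
- move=> k Hk; rewrite Hk.
  have := HR (n - k) (leq_subr k n). by rewrite subKn.
Qed.

End Aux.

Theorem lemma28 (P : countType) (M1 M2 : QDModel P) :
  (forall (Z : M1 -> M2 -> Prop) Z1 Z2,
     pp_bisim Z Z1 Z2 -> modal_bisim_conv Z) /\
  (forall rho : M1 -> M2 -> Prop,
     (exists x1 x2, rho x1 x2) -> modal_bisim_conv rho ->
     exists Z1 Z2, pp_bisim rho Z1 Z2).
Proof.
split.
- move=> Z Z1 Z2 [_ [_ [_ [H1 [_ [H3 [H4 [_ [H6 H7]]]]]]]]] x1 x2 Hx.
  have [Hv [Hn2 Hn1]] := H1 _ _ Hx.
  split; first exact: Hv.
  split.
    move=> y1 Hy. have [N1 [HN1 HN]] := Hn2 _ (Nmin_nbh x2).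
    exact: HN _ (Nmin_least HN1 Hy).
  split.
    move=> y2 Hy. have [N2 [HN2 HN]] := Hn1 _ (Nmin_nbh x1).
    have [y1 [Hy1 Hz]] := HN _ (Nmin_least HN2 Hy).
    by exists y1.
  split.
  + move=> y1 Hy.
    pose p := fun n : nat => if n is 0 then y1 else x1.
    have Pp : is_path p.
      apply/pathP => [[|n]] /=; [exact: Hy|exact: Nmin_refl].
    have [q [m [Pq [Hqm [Hz HZ1]]]]] := H3 _ _ p 1 Hx Pp erefl (fun e => ltac:(discriminate)).
    case: m Hqm HZ1 => [|[|m]] Hqm HZ1.
    * exists x2; split; first exact: Nmin_refl. by rewrite -Hqm.
    * exists (q 0); split; last exact: Hz. rewrite -Hqm; move/pathP: Pq => Pq; exact: Pq 0.
    * have [kp [Hk _]] := H4 _ _ _ _ HZ1 1 erefl.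
      by move: Hk; case: kp.
  + move=> y2 Hy.
    pose q := fun n : nat => if n is 0 then y2 else x2.
    have Pq : is_path q.
      apply/pathP => [[|n]] /=; [exact: Hy|exact: Nmin_refl].
    have [p [n [Pp [Hpn [Hz HZ2]]]]] := H6 _ _ q 1 Hx Pq erefl (fun e => ltac:(discriminate)).
    case: n Hpn HZ2 => [|[|n]] Hpn HZ2.
    * exists x1; split; first exact: Nmin_refl. by rewrite -Hpn.
    * exists (p 0); split; last exact: Hz. rewrite -Hpn; move/pathP: Pp => Pp; exact: Pp 0.
    * have [kq [Hk _]] := H7 _ _ _ _ HZ2 1 erefl.
      by move: Hk; case: kq.
- move=> rho Hne Hb.
  exists (fun a b => is_path a.1 /\ is_path b.1 /\ b.2 = a.2 /\
                     forall k, k <= a.2 -> rho (a.1 k) (b.1 k)).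
  exists (fun b a => is_path b.1 /\ is_path a.1 /\ a.2 = b.2 /\
                     forall k, k <= b.2 -> rho (a.1 k) (b.1 k)).
  have zig : forall a b, rho a b -> forall a', edge a a' -> exists b', edge b b' /\ rho a' b'.
    by move=> a b /Hb [_ [H _]].
  have zag : forall a b, rho a b -> forall a', edge a' a -> exists b', edge b' b /\ rho a' b'.
    by move=> a b /Hb [_ [_ [_ [H _]]]].
  have zig' : forall b a, rho a b -> forall b', edge b b' -> exists a', edge a a' /\ rho a' b'.
    move=> b a /Hb [_ [_ [H _]]] b' Hb'. have [a' [??]] := H _ Hb'. by exists a'.
  have zag' : forall b a, rho a b -> forall b', edge b' b -> exists a', edge a' a /\ rho a' b'.
    move=> b a /Hb [_ [_ [_ [_ H]]]] b' Hb'. have [a' [??]] := H _ Hb'. by exists a'.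
  split; first exact: Hne.
  split; first by move=> p n q m /= [? [? _]].
  split; first by move=> q m p n /= [? [? _]].
  split.
    move=> x1 x2 Hx; have [Hv [Hf _]] := Hb _ _ Hx.
    split; first exact: Hv.
    split.
    + move=> N2 HN2; exists (Nmin x1); split; first exact: Nmin_nbh.
      move=> y1 Hy; have [y2 [Hy2 Hr]] := Hf _ Hy.
      exists y2; split; last exact: Hr. exact: Nmin_least HN2 _ Hy2.
    + move=> N1 HN1; exists (Nmin x2); split; first exact: Nmin_nbh.
      move=> y2 Hy; have [y1 [Hy1 Hr]] := zig' _ _ Hx _ Hy.
      exists y1; split; last exact: Hr. exact: Nmin_least HN1 _ Hy1.
  split.
    move=> x1 x2 p n Hx Pp Hp0 _.
    have [q [Pq [Hq0 HR]]] := fwd (b0:=x2) zig Pp (ltac:(rewrite Hp0; exact: Hx)).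
    exists q, n; do 3 (split => //).
  split.
    move=> x1 x2 p n Hx Pp Hpn _.
    have [q [Pq [Hqn HR]]] := bwd (n:=n) (b0:=x2) zag Pp (ltac:(rewrite Hpn; exact: Hx)).
    exists q, n; do 3 (split => //). exact: HR.
  split.
    move=> p n q m /= [_ [_ [-> HR]]] kq Hk; exists kq; split => //.
    apply: HR; by case/andP: Hk => _ /ltnW.
  split.
    move=> x1 x2 q m Hx Pq Hq0 _.
    have [p [Pp [Hp0 HR]]] := fwd (R := fun b a => rho a b) (b0:=x1) zig' Pq (ltac:(rewrite Hq0; exact: Hx)).
    exists p, m; do 3 (split => //).
  split.
    move=> x1 x2 q m Hx Pq Hqm _.
    have [p [Pp [Hpm HR]]] := bwd (R := fun b a => rho a b) (n:=m) (b0:=x1) zag' Pq (ltac:(rewrite Hqm; exact: Hx)).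
    exists p, m; do 3 (split => //). exact: HR.
  move=> q m p n /= [_ [_ [-> HR]]] kp Hk; exists kp; split => //.
  apply: HR; by case/andP: Hk => _ /ltnW.
Qed.
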